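(* Let $G$ be a finite transitive permutation group on a set $V$ whose point stabilizers have order $2$ or $3$. Then the complement $\overline{\Gamma_G}$ of the derangement graph of $G$ is arc-transitive.
   Context: An element of $G$ is a derangement if it fixes no point of $V$. Let $\mathcal{D}$ be the set of derangements of $G$. The derangement graph $\Gamma_G=\mathrm{Cay}(G,\mathcal{D})$ is the graph with vertex set $G$ in which $g,h\in G$ are adjacent if and only if $g^{-1}h \in \mathcal{D}$; $\overline{\Gamma_G}$ is its complement graph (distinct $g,h$ adjacent iff $g^{-1}h$ fixes some point). *)

(* Defs.v *)
From mathcomp Require Import all_boot all_fingroup action.
Set Implicit Arguments. Unset Strict Implicit. Unset Printing Implicit Defensive.
Local Open Scope group_scope.

Definition derangement (V : finType) (x : {perm V}) : bool := [forall v, x v != v].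

(* Derangement graph Gamma_G = Cay(G, D): vertex set G (as the finite type
   subg_of G of elements of G), g ~ h iff g^-1 h is a derangement. *)
Definition derangement_adj (V : finType) (G : {group {perm V}}) : rel (subg_of G) :=
  fun g h => derangement ((sgval g)^-1 * sgval h).

Definition complement_rel (T : finType) (e : rel T) : rel T :=
  fun x y => (x != y) && ~~ e x y.

Definition graph_aut (T : finType) (e : rel T) (s : {perm T}) : Prop :=
  forall x y, e (s x) (s y) = e x y.

Definition arc_transitive (T : finType) (e : rel T) : Prop :=
  forall x1 y1 x2 y2, e x1 y1 -> e x2 y2 ->
    exists s : {perm T}, [/\ graph_aut e s, s x1 = x2 & s y1 = y2].
Arguments derangement_adj {V} G _ _.

(* Main.v *)
Require Import Defs.
From mathcomp Require Import all_boot all_fingroup action.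

Local Open Scope group_scope.

Lemma der_conj (V : finType) (s g : {perm V}) :
  derangement s -> derangement (s ^ g).
Proof.
move/forallP=> H; apply/forallP=> v; apply/eqP=> E.
rewrite conjgE !permM in E.
have := H (g^-1 v); rewrite -{2}E permK eqxx //.
Qed.

Lemma der_inv (V : finType) (s : {perm V}) :
  derangement s -> derangement s^-1.
Proof.
move/forallP=> H; apply/forallP=> v; apply/eqP=> E.
have := H v; rewrite -{1}E permKV eqxx //.
Qed.

Lemma der_conjE (V : finType) (s g : {perm V}) :
  derangement (s ^ g) = derangement s.
Proof.
apply/idP/idP; last exact: der_conj.
by move/(@der_conj _ _ g^-1); rewrite conjgK.
Qed.

Lemma der_invE (V : finType) (s : {perm V}) :
  derangement s^-1 = derangement s.
Proof.
apply/idP/idP; last exact: der_inv.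
by move/der_inv; rewrite invgK.
Qed.

Lemma L1 (gT : finGroupType) (a b g x y : gT) :
  (a * (b^-1*x)^g)^-1 * (a * (b^-1*y)^g) = (x^-1*y)^g.
Proof.
rewrite invMg -mulgA (mulgA a^-1) mulVg mul1g -conjVg -conjMg invMg invgK.
by rewrite -[x^-1 * b * _]mulgA mulKVg.
Qed.
Lemma L2 (gT : finGroupType) (a b g x y : gT) :
  (a * ((b^-1*x)^g)^-1)^-1 * (a * ((b^-1*y)^g)^-1) = (x * y^-1)^(b*g).
Proof.
rewrite invMg invgK -mulgA (mulgA a^-1) mulVg mul1g -conjVg -conjMg.
rewrite conjgM; congr (_ ^ g).
by rewrite conjgE invMg invgK !mulgA.
Qed.
Lemma L3 (gT : finGroupType) (x y : gT) :
  x * y^-1 = ((x^-1*y)^-1)^(x^-1).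
Proof. by rewrite conjgE invgK invMg invgK mulgK. Qed.

Theorem lemma2p4 (V : finType) (G : {group {perm V}}) :
  [transitive G, on [set: V] | 'P] ->
  (forall v : V, #|('C_G[v | 'P])%g| = 2 \/ #|('C_G[v | 'P])%g| = 3) ->
  arc_transitive (complement_rel (derangement_adj G)).
Proof.
move=> Htr Hst x1 y1 x2 y2 /andP[n1 d1] /andP[n2 d2].
pose D (u : subg_of G) := derangement (sgval u).
have DJ (u h : subg_of G) : D (u ^ h) = D u.
  by rewrite /D; change (derangement (sgval u ^ sgval h) = derangement (sgval u)); exact: der_conjE.
have DV (u : subg_of G) : D (u^-1) = D u.
  by rewrite /D; change (derangement (sgval u)^-1 = derangement (sgval u)); exact: der_invE.
set s := x1^-1 * y1; set t := x2^-1 * y2.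
have ns : s != 1 by rewrite /s -eq_mulVg1.
have nt : t != 1 by rewrite /t -eq_mulVg1.
have [g Hg] : exists g : subg_of G, s ^ g = t \/ s ^ g = t^-1.
  have /existsP[v /negPn/eqP Hv] : [exists v, ~~ (sgval s v != v)].
    by rewrite -negb_forall; exact: d1.
  have /existsP[w /negPn/eqP Hw] : [exists v, ~~ (sgval t v != v)].
    by rewrite -negb_forall; exact: d2.
  have [g' Gg' Ew] := atransP2 Htr (in_setT v) (in_setT w).
  exists (subg G g').
  have Eg : sgval (subg G g') = g' by exact: subgK.
  set u := sgval (s ^ subg G g').
  have Hu : u \in 'C_G[w | 'P].
    rewrite in_setI subgP; apply/astab1P.
    rewrite /= /u /= Eg Ew apermE -['P%act v g']/(g' v) !permM permK.
    by congr (g' _); move: Hv; rewrite /= permM.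
  have Ht : sgval t \in 'C_G[w | 'P].
    by rewrite in_setI subgP; apply/astab1P; rewrite /= apermE Hw.
  have nu : u != 1.
    apply/eqP=> h; move/eqP: ns; apply; apply: (@conjg_inj _ (subg G g')).
    by rewrite conj1g; apply: subg_inj; exact: h.
  have nt' : sgval t != 1.
    by apply/eqP=> h; move/eqP: nt; apply; apply: subg_inj; exact: h.
  set H := 'C_G[w | 'P].
  have Hp : prime #|H| by case: (Hst w) => ->.
  have Ho : #[sgval t] = #|H|.
    apply/prime_nt_dvdP => //; first by rewrite order_eq1.
    by apply: cardSg; rewrite cycle_subG.
  have HC : <[sgval t]> = H.
    apply/eqP; rewrite eqEcard cycle_subG Ht /=.
    by rewrite -[#|<[sgval t]>|]/#[sgval t] Ho.
  move: Hu; rewrite -/H -HC => /cycleP[i Ei].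
  rewrite -expg_mod_order Ho in Ei.
  have : i %% #|H| < #|H| by rewrite ltn_pmod // prime_gt0.
  have Einv : (sgval t)^-1 = sgval t ^+ (#|H|).-1 by rewrite invg_expg Ho.
  move: Einv Ei; case: (Hst w) => ->; set k := i %% _;
    case: k => [|[|[|k]]] //= Einv Ei _.
  - by rewrite Ei eqxx in nu.
  - by left; apply: subg_inj; rewrite -/u Ei expg1.
  - by rewrite Ei eqxx in nu.
  - by left; apply: subg_inj; rewrite -/u Ei expg1.
  - by right; apply: subg_inj; rewrite -/u Ei; exact: (esym Einv).
case: Hg => E.
- pose f x := x2 * (x1^-1 * x) ^ g.
  have finj : injective f.
    by move=> x y; rewrite /f => /mulgI /conjg_inj /mulgI.
  exists (perm finj); split.
  + move=> x y; rewrite /complement_rel !permE (inj_eq finj); congr andb.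
    congr negb; change (D ((f x)^-1 * f y) = D (x^-1 * y)).
    by rewrite /f L1 DJ.
  + by rewrite permE /f mulVg conj1g mulg1.
  + by rewrite permE /f -/s E /t mulKVg.
- pose f x := x2 * ((x1^-1 * x) ^ g)^-1.
  have finj : injective f.
    by move=> x y; rewrite /f => /mulgI /invg_inj /conjg_inj /mulgI.
  exists (perm finj); split.
  + move=> x y; rewrite /complement_rel !permE (inj_eq finj); congr andb.
    congr negb; change (D ((f x)^-1 * f y) = D (x^-1 * y)).
    by rewrite /f L2 DJ L3 DJ DV.
  + by rewrite permE /f mulVg conj1g invg1 mulg1.
  + by rewrite permE /f -/s E invgK /t mulKVg.
Qed.
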